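(* Let $n\ge 2$, $p\ge 2$, $\kappa\in\{0,1\}$ and $f^0,f^1\in\mathbb{R}^n$ with $f^0,f^1\ge 0$ and $\|f^0\|_1=\|f^1\|_1$. Consider the problem $$\min_{m\in\mathbb{R}^{(n-\kappa)p},\ f\in\mathbb{R}^{n(p-1)}} \|J(S_M m,\ S_F f+f_b^{+})\|_1 \quad\text{subject to}\quad D_M m+D_F f=f_b^{-}$$ (with $S_M,D_M,S_F,D_F,f_b^{\pm},J$ as in the context). If $(m_1,f_1)$ and $(m_2,f_2)$ are two minimizers, then $$\frac{(S_M m_1)_i}{(S_F f_1+f_b^{+})_i}=\frac{(S_M m_2)_i}{(S_F f_2+f_b^{+})_i}$$ for every index $i$ at which both denominators $(S_F f_1+f_b^{+})_i$ and $(S_F f_2+f_b^{+})_i$ are positive.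
   Context: Vectors $f\in\mathbb{R}^{n(p-1)}$, $m\in\mathbb{R}^{(n-\kappa)p}$ are discrete density and momentum reordered columnwise (time index outer); $\kappa=1$ is the Neumann and $\kappa=0$ the periodic spatial boundary case. $\otimes$ is the Kronecker product. Matrices: $S_p\in\mathbb{R}^{p-1,p}$ has $j$-th row $\tfrac12(e_j+e_{j+1})^{T}$; $D_p\in\mathbb{R}^{p-1,p}$ has $j$-th row $p(-e_j+e_{j+1})^{T}$. $S_n,D_n\in\mathbb{R}^{n-1,n}$ have $j$-th rows $\tfrac12(e_j+e_{j+1})^{T}$ and $n(-e_j+e_{j+1})^{T}$. $S_{n,per}\in\mathbb{R}^{n,n}$ has first row $\tfrac12(e_1+e_n)^T$ and $j$-th row $\tfrac12(e_{j-1}+e_j)^T$ ($j\ge2$); $D_{n,per}\in\mathbb{R}^{n,n}$ has first row $n(-e_1+e_n)^T$ and $j$-th row $n(e_{j-1}-e_j)^T$ ($j\ge 2$). $S_F:=S_p^{T}\otimes I_n$, $D_F:=-D_p^{T}\otimes I_n$; $S_M:=I_p\otimes S_n^{T}$, $D_M:=I_p\otimes(-D_n^{T})$ if $\kappa=1$, and $S_M:=I_p\otimes S_{n,per}^{T}$, $D_M:=I_p\otimes D_{n,per}^{T}$ if $\kappa=0$. $f_b^{+}:=\tfrac12((f^0)^T,0_{n(p-2)}^T,(f^1)^T)^T$, $f_b^{-}:=p((f^0)^T,0_{n(p-2)}^T,-(f^1)^T)^T$, both in $\mathbb{R}^{np}$. $J$ acts componentwise: $J(u,v)_i=u_i^2/(2v_i)$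 if $v_i>0$, $0$ if $(u_i,v_i)=(0,0)$, $+\infty$ otherwise, and $\|J(u,v)\|_1=\sum_i J(u,v)_i$. *)

(* Defs.v *)
From HB Require Import structures.
From mathcomp Require Import all_boot all_order all_algebra.
From mathcomp Require Import reals constructive_ereal.
Unset Printing Implicit Defensive.
Import Order.TTheory GRing.Theory Num.Theory.
Local Open Scope ring_scope.

Section Defs.
Variable R : realType.

(* Flattening of a pair index (a, b) : 'I_m * 'I_n into 'I_(m * n), with the
   FIRST component outer (index a * n + b); this is MathComp's own ordering,
   used by mxvec.  [unpair k] is the inverse. *)
Definition unpair {m n : nat} (k : 'I_(m * n)) : 'I_m * 'I_n :=
  enum_val (cast_ord (esym (mxvec_cast m n)) k).

Definition kron {m1 n1 m2 n2 : nat} (A : 'M[R]_(m1, n1)) (B : 'M[R]_(m2, n2))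
  : 'M[R]_(m1 * m2, n1 * n2) :=
  \matrix_(i, j) (A (unpair i).1 (unpair j).1 * B (unpair i).2 (unpair j).2).

Definition S_e (r c : nat) : R := ((c == r)%:R + (c == r.+1)%:R) / 2.
Definition D_e (k r c : nat) : R := k%:R * (- (c == r)%:R + (c == r.+1)%:R).
(* periodic: row 0 is 1/2(e_1 + e_n) resp. n(-e_1 + e_n); row j >= 1 is
   1/2(e_{j-1}+e_j) resp. n(e_{j-1} - e_j)  (paper's 1-based, here 0-based). *)
Definition Sper_e (n r c : nat) : R :=
  if r == 0%N then ((c == 0%N)%:R + (c == n.-1)%:R) / 2
  else ((c == r.-1)%:R + (c == r)%:R) / 2.
Definition Dper_e (n r c : nat) : R :=
  if r == 0%N then n%:R * (- (c == 0%N)%:R + (c == n.-1)%:R)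
  else n%:R * ((c == r.-1)%:R - (c == r)%:R).

Definition S_p (p : nat) : 'M[R]_(p.-1, p) := \matrix_(j, k) S_e j k.
Definition D_p (p : nat) : 'M[R]_(p.-1, p) := \matrix_(j, k) D_e p j k.
Definition S_n (n : nat) : 'M[R]_(n.-1, n) := \matrix_(j, k) S_e j k.
Definition D_n (n : nat) : 'M[R]_(n.-1, n) := \matrix_(j, k) D_e n j k.
Definition S_nper (n : nat) : 'M[R]_(n, n) := \matrix_(j, k) Sper_e n j k.
Definition D_nper (n : nat) : 'M[R]_(n, n) := \matrix_(j, k) Dper_e n j k.

(* Spatial blocks of S_M, D_M: for kappa = 1 these are S_n^T and -D_n^T
   (entries written out, since n - kappa is not syntactically n.-1);
   for kappa = 0 they are S_{n,per}^T and D_{n,per}^T. *)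
Definition SMblock (n kappa : nat) : 'M[R]_(n, n - kappa) :=
  \matrix_(i, j) (if kappa == 1%N then S_e j i else Sper_e n j i).
Definition DMblock (n kappa : nat) : 'M[R]_(n, n - kappa) :=
  \matrix_(i, j) (if kappa == 1%N then - D_e n j i else Dper_e n j i).

Definition S_F (n p : nat) : 'M[R]_(p * n, p.-1 * n) := kron (S_p p)^T (1%:M : 'M[R]_n).
Definition D_F (n p : nat) : 'M[R]_(p * n, p.-1 * n) := kron (- (D_p p)^T) (1%:M : 'M[R]_n).
Definition S_M (n p kappa : nat) : 'M[R]_(p * n, p * (n - kappa)) :=
  kron (1%:M : 'M[R]_p) (SMblock n kappa).
Definition D_M (n p kappa : nat) : 'M[R]_(p * n, p * (n - kappa)) :=
  kron (1%:M : 'M[R]_p) (DMblock n kappa).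

(* f_b^+ = 1/2 (f0; 0; ...; 0; f1),  f_b^- = p (f0; 0; ...; 0; -f1),
   time blocks outer (block t occupies indices t*n .. t*n+n-1). *)
Definition fb_plus (n p : nat) (f0 f1 : 'I_n -> R) : 'cV[R]_(p * n) :=
  (mxvec (\matrix_(t < p, s < n)
     (if t == 0%N :> nat then f0 s / 2 else if t == p.-1 :> nat then f1 s / 2 else 0)))^T.
Definition fb_minus (n p : nat) (f0 f1 : 'I_n -> R) : 'cV[R]_(p * n) :=
  (mxvec (\matrix_(t < p, s < n)
     (if t == 0%N :> nat then p%:R * f0 s
      else if t == p.-1 :> nat then p%:R * (- f1 s) else 0)))^T.

Definition Jfun (u v : R) : \bar R :=
  if 0 < v then ((u ^+ 2) / (2 * v))%:E
  else if (u == 0) && (v == 0) then 0%E else +oo%E.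

Definition objective (n p kappa : nat) (f0 f1 : 'I_n -> R)
  (m : 'cV[R]_(p * (n - kappa))) (f : 'cV[R]_(p.-1 * n)) : \bar R :=
  (\sum_(i < p * n)
     Jfun ((S_M n p kappa *m m) i ord0) ((S_F n p *m f + fb_plus n p f0 f1) i ord0))%E.

Definition feasible (n p kappa : nat) (f0 f1 : 'I_n -> R)
  (m : 'cV[R]_(p * (n - kappa))) (f : 'cV[R]_(p.-1 * n)) : Prop :=
  D_M n p kappa *m m + D_F n p *m f = fb_minus n p f0 f1.

Definition is_minimizer (n p kappa : nat) (f0 f1 : 'I_n -> R)
  (m : 'cV[R]_(p * (n - kappa))) (f : 'cV[R]_(p.-1 * n)) : Prop :=
  feasible n p kappa f0 f1 m f /\
  forall m' f', feasible n p kappa f0 f1 m' f' ->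
    (objective n p kappa f0 f1 m f <= objective n p kappa f0 f1 m' f')%E.

End Defs.

(* Main.v *)
Require Import Defs.
From mathcomp Require Import all_boot all_order all_algebra.
From mathcomp Require Import reals constructive_ereal.
From mathcomp Require Import ring lra zify.
Import Order.TTheory GRing.Theory Num.Theory.
Local Open Scope ring_scope.

Section Aux.
Variable R : realType.

Definition fineb (u v : R) : bool := (0 < v) || ((u == 0) && (v == 0)).
Definition Jr (u v : R) : R := if 0 < v then u ^+ 2 / (2 * v) else 0.

Lemma Jr_ge0 u v : 0 <= Jr u v.
Proof.
rewrite /Jr; case: ifP => // v0.
by apply: divr_ge0; rewrite ?sqr_ge0 // mulr_ge0 // ltW.
Qed.

Lemma JfunE u v : Jfun R u v = if fineb u v then (Jr u v)%:E else +oo%E.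
Proof.
rewrite /Jfun /fineb /Jr; case: ifP => //= h.
Qed.

Lemma Jfun_ge0 u v : (0 <= Jfun R u v)%E.
Proof. rewrite JfunE; case: ifP => _; last exact: leey. by rewrite lee_fin Jr_ge0. Qed.

Lemma sumJ_fine N (u v : 'I_N -> R) : (forall i, fineb (u i) (v i)) ->
  (\sum_i Jfun R (u i) (v i) = (\sum_i Jr (u i) (v i))%:E)%E.
Proof. by move=> H; rewrite -sumEFin; apply: eq_bigr => i _; rewrite JfunE H. Qed.

Lemma sumJ_inf N (u v : 'I_N -> R) i : ~~ fineb (u i) (v i) ->
  (\sum_k Jfun R (u k) (v k) = +oo)%E.
Proof.
move=> H; rewrite (bigD1 i) //= JfunE (negbTE H) addye //.
have : (0 <= \sum_(k < N | k != i) Jfun R (u k) (v k))%E.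
  by apply: sume_ge0 => k _; exact: Jfun_ge0.
by case: (\sum_(k < N | k != i) _)%E.
Qed.

Lemma fine_mid u1 v1 u2 v2 : fineb u1 v1 -> fineb u2 v2 ->
  fineb ((u1 + u2) / 2) ((v1 + v2) / 2).
Proof.
rewrite /fineb => /orP[h1|/andP[/eqP-> /eqP->]] /orP[h2|/andP[/eqP-> /eqP->]].
- by apply/orP; left; lra.
- by apply/orP; left; lra.
- by apply/orP; left; lra.
- by apply/orP; right; rewrite !addr0 mul0r eqxx.
Qed.

Lemma Jr_gap u1 v1 u2 v2 : 0 < v1 -> 0 < v2 ->
  (Jr u1 v1 + Jr u2 v2) / 2 - Jr ((u1 + u2) / 2) ((v1 + v2) / 2) =
  (u1 * v2 - u2 * v1) ^+ 2 / (4 * v1 * v2 * (v1 + v2)).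
Proof.
move=> h1 h2; rewrite /Jr h1 h2 ifT; last by lra.
have : v1 != 0 by rewrite gt_eqF. have : v2 != 0 by rewrite gt_eqF.
have : v1 + v2 != 0 by rewrite gt_eqF // addr_gt0.
move=> *; field; rewrite ?mulf_neq0 //; lra.
Qed.

Lemma Jr_mid_le u1 v1 u2 v2 : fineb u1 v1 -> fineb u2 v2 ->
  Jr ((u1 + u2) / 2) ((v1 + v2) / 2) <= (Jr u1 v1 + Jr u2 v2) / 2.
Proof.
move=> /orP[h1|/andP[/eqP-> /eqP->]] /orP[h2|/andP[/eqP-> /eqP->]].
- rewrite -subr_ge0 Jr_gap //; apply: divr_ge0; first exact: sqr_ge0.
  by rewrite !mulr_ge0 // ?ltW // addr_gt0.
- rewrite /Jr h1 ltxx !addr0 ifT; last by lra.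
  rewrite le_eqVlt; apply/orP; left; apply/eqP; have : v1 != 0 by rewrite gt_eqF.
  move=> *; field; lra.
- rewrite /Jr h2 ltxx !add0r ifT; last by lra.
  rewrite le_eqVlt; apply/orP; left; apply/eqP; have : v2 != 0 by rewrite gt_eqF.
  move=> *; field; lra.
- by rewrite /Jr !addr0 mul0r ltxx; lra.
Qed.

Lemma Jr_mid_lt u1 v1 u2 v2 : 0 < v1 -> 0 < v2 -> u1 / v1 != u2 / v2 ->
  Jr ((u1 + u2) / 2) ((v1 + v2) / 2) < (Jr u1 v1 + Jr u2 v2) / 2.
Proof.
move=> h1 h2; rewrite (eqr_div _ _ (lt0r_neq0 h1) (lt0r_neq0 h2)) => hne.
rewrite -subr_gt0 Jr_gap //; apply: divr_gt0.
  by rewrite exprn_even_gt0 //= subr_eq0.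
by rewrite !mulr_gt0 // addr_gt0.
Qed.

Lemma sum_ind1 N (a : nat) (g : nat -> R) :
  \sum_(j < N) ((a == j)%:R * g j) = (a < N)%N%:R * g a.
Proof.
elim: N => [|N IH]; first by rewrite big_ord0 ltn0 mul0r.
rewrite big_ord_recr /= IH; case: (ltngtP a N) => h.
- by rewrite (ltn_trans h (ltnSn _)) mul0r addr0.
- by rewrite ltnS leqNgt h /= !mul0r addr0.
- by rewrite h ltnSn mul0r add0r.
Qed.

Lemma sum_ind2 N (a : nat) (g : nat -> R) :
  \sum_(j < N) ((a == j.+1)%:R * g j) = ((0 < a)%N && (a.-1 < N)%N)%:R * g a.-1.
Proof.
case: a => [|a] /=.
  by rewrite big1 ?mul0r // => j _; rewrite mul0r.
rewrite -(sum_ind1 N a g); apply: eq_bigr => j _; by rewrite eqSS.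
Qed.

Lemma sum_delta (T : finType) (x : T) (G : T -> R) :
  \sum_i ((x == i)%:R * G i) = G x.
Proof.
rewrite (bigD1 x) //= eqxx mul1r big1 ?addr0 // => i hi.
by rewrite eq_sym (negbTE hi) mul0r.
Qed.

Lemma unpair_mx m n (t : 'I_m) (s : 'I_n) : unpair (mxvec_index t s) = (t, s).
Proof. by rewrite /unpair /mxvec_index cast_ordK enum_rankK. Qed.

Lemma sum_pair a b (G : 'I_(a * b) -> R) :
  \sum_k G k = \sum_(t < a) \sum_(s < b) G (mxvec_index t s).
Proof.
rewrite pair_big /= (reindex (uncurry (@mxvec_index a b))) /=; last exact: curry_mxvec_bij.
by apply: eq_bigr => [[t s]].
Qed.

Lemma kronE m1 n1 m2 n2 (A : 'M[R]_(m1, n1)) (B : 'M[R]_(m2, n2)) t s t' s' :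
  kron R A B (mxvec_index t s) (mxvec_index t' s') = A t t' * B s s'.
Proof. by rewrite mxE !unpair_mx. Qed.


Lemma sum_ind1n N (a : nat) (g : nat -> R) :
  \sum_(0 <= j < N) ((a == j)%:R * g j) = (a < N)%N%:R * g a.
Proof. by rewrite big_mkord sum_ind1. Qed.

Lemma sum_ind2n N (a : nat) (g : nat -> R) :
  \sum_(0 <= j < N) ((a == j.+1)%:R * g j) = ((0 < a)%N && (a.-1 < N)%N)%:R * g a.-1.
Proof. by rewrite big_mkord sum_ind2. Qed.

Definition Ps n (w : 'I_n -> R) (j : nat) : R := \sum_(k < n | (k < j)%N) w k.
Arguments Ps {n}.

Lemma Ps0 n (w : 'I_n -> R) : Ps w 0 = 0.
Proof. by rewrite /Ps big_pred0 // => k; rewrite ltn0. Qed.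

Lemma PsS n (w : 'I_n -> R) (s : 'I_n) : Ps w s.+1 = Ps w s + w s.
Proof.
rewrite /Ps (bigD1 s) /= ?ltnSn // addrC; congr (_ + _); apply: eq_bigl => k.
by rewrite ltnS ltn_neqAle andbC.
Qed.

Lemma PsN n (w : 'I_n -> R) : Ps w n = \sum_i w i.
Proof. by rewrite /Ps; apply: eq_bigl => k; rewrite ltn_ord. Qed.

Lemma spatial n kappa (w : 'I_n -> R) : (1 < n)%N -> (kappa <= 1)%N ->
  \sum_i w i = 0 -> forall s : 'I_n,
  \sum_(j < n - kappa) DMblock R n kappa s j * (Ps w (j + kappa) / n%:R) = w s.
Proof.
move=> hn hk hw s.
have n0 : n%:R != 0 :> R by rewrite pnatr_eq0 -lt0n (ltn_trans _ hn).
pose F (j : nat) := (if kappa == 1%N then - D_e R n j s else Dper_e R n j s)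
                    * (Ps w (j + kappa) / n%:R).
rewrite (eq_bigr (fun j : 'I_(n - kappa) => F (val j))); last by move=> j _; rewrite mxE.
rewrite -(big_mkord xpredT F).
have -> : \sum_(0 <= j < n - kappa) F j =
   \sum_(0 <= j < n.-1) (((s : nat) == j)%:R * Ps w j.+1 - ((s : nat) == j.+1)%:R * Ps w j.+1).
  rewrite /F; clear F; case: kappa hk => [|[|//]] _ /=.
  - rewrite subn0; case: n w s hn n0 hw => [|n'] // w s hn n0 hw /=.
    rewrite big_nat_recl //= Ps0 mul0r mulr0 add0r.
    apply: eq_bigr => j _; rewrite addn0 /Dper_e /=.
    rewrite mulrBr mulrBl; congr (_ - _); field;
      by apply: lt0r_neq0; have := ler0n R n'; lra.
  - rewrite (_ : (n - 1)%N = n.-1); last by rewrite subn1.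
    apply: eq_bigr => j _; rewrite addn1 /D_e.
    by field.
rewrite sumrB sum_ind1n sum_ind2n.
have e2 : ((0 < s)%N && (s.-1 < n.-1)%N)%:R * Ps w s.-1.+1 = Ps w s.
  case: (posnP s) => [s0|sp]; first by rewrite s0 /= mul0r Ps0.
  have h1 : (s.-1 < n.-1)%N by have := ltn_ord s; lia.
  by rewrite h1 /= mul1r prednK.
rewrite e2; case: (ltnP s n.-1) => h.
  by rewrite mul1r PsS addrAC subrr add0r.
rewrite mul0r add0r.
have es : (s.+1 = n)%N by have := ltn_ord s; lia.
have := @PsS _ w s; rewrite es PsN hw; lra.
Qed.


Lemma kron_mulE m1 n1 m2 n2 (A : 'M[R]_(m1, n1)) (B : 'M[R]_(m2, n2))
  (x : 'cV[R]_(n1 * n2)) t s :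
  (kron R A B *m x) (mxvec_index t s) 0 =
  \sum_(t' < n1) \sum_(s' < n2) A t t' * B s s' * x (mxvec_index t' s') 0.
Proof.
rewrite mxE sum_pair; apply: eq_bigr => t' _; apply: eq_bigr => s' _.
by rewrite kronE.
Qed.

Lemma witness (n p kappa : nat) (f0 f1 : 'I_n -> R)
  (hn : (2 <= n)%N) (hp : (2 <= p)%N) (hk : (kappa <= 1)%N)
  (hf0 : forall i, 0 <= f0 i) (hf1 : forall i, 0 <= f1 i)
  (hmass : \sum_i `|f0 i| = \sum_i `|f1 i|) :
  exists m g, feasible R n p kappa f0 f1 m g /\
    forall k, fineb ((S_M R n p kappa *m m) k ord0)
                    ((S_F R n p *m g + fb_plus R n p f0 f1) k ord0).
Proof.
have sumf : \sum_i f0 i = \sum_i f1 i.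
  by rewrite -(eq_bigr _ (fun i _ => ger0_norm (hf0 i))) hmass;
     apply: eq_bigr => i _; rewrite ger0_norm.
have M0ge : 0 <= \sum_i f0 i by apply: sumr_ge0 => i _.
have [M00|Mne] := eqVneq (\sum_i f0 i) 0.
  have z0 i : f0 i = 0 by apply: (psumr_eq0P (fun i _ => hf0 i) M00).
  have z1 i : f1 i = 0.
    have M1 : \sum_i f1 i = 0 by rewrite -sumf.
    by apply: (psumr_eq0P (fun i _ => hf1 i) M1).
  exists 0, 0; split.
    rewrite /feasible !mulmx0 addr0; apply/matrixP => k y.
    rewrite !mxE ord1; case/mxvec_indexP: k => t s; rewrite mxvecE mxE z0 z1.
    by rewrite mulr0 oppr0 mulr0; case: ifP => //; case: ifP.
  move=> k; apply/orP; right; rewrite !mulmx0 add0r !mxE eqxx /=.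
  case/mxvec_indexP: k => t s; rewrite mxvecE mxE z0 z1 mul0r.
  by case: ifP => //; case: ifP.
have Mpos : 0 < \sum_i f0 i by rewrite lt_def Mne.
have n0 : n%:R != 0 :> R by rewrite pnatr_eq0 -lt0n (ltn_trans _ hn).
have ngt : 0 < n%:R :> R by rewrite ltr0n (ltn_trans _ hn).
pose c := (\sum_i f0 i) / n%:R.
have cpos : 0 < c by rewrite /c divr_gt0.
have nc : n%:R * c = \sum_i f0 i by rewrite /c; field.
pose g : 'cV[R]_(p.-1 * n) := const_mx c.
pose br (t : nat) : R := (t < p.-1)%N%:R - ((0 < t)%N && (t.-1 < p.-1)%N)%:R.
pose bs (t : nat) : R := (t < p.-1)%N%:R + ((0 < t)%N && (t.-1 < p.-1)%N)%:R.
have DFg t s : (D_F R n p *m g) (mxvec_index t s) 0 = p%:R * c * br t.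
  rewrite /D_F kron_mulE.
  rewrite (eq_bigr (fun t' : 'I_p.-1 => ((t : nat) == t')%:R * (p%:R * c)
                     - ((t : nat) == t'.+1)%:R * (p%:R * c))); last first.
    move=> t' _.
    rewrite (eq_bigr (fun s' => (s == s')%:R * ((- (D_p R p)^T) t t' * c))); last first.
      by move=> sp _; rewrite !mxE; ring.
    by rewrite (@sum_delta _ s (fun=> (- (D_p R p)^T) t t' * c)) !mxE /D_e; ring.
  rewrite sumrB (sum_ind1 _ _ (fun _ => p%:R * c)) (sum_ind2 _ _ (fun _ => p%:R * c)).
  by rewrite /br; ring.
have SFg t s : (S_F R n p *m g) (mxvec_index t s) 0 = c / 2 * bs t.
  rewrite /S_F kron_mulE.
  rewrite (eq_bigr (fun t' : 'I_p.-1 => ((t : nat) == t')%:R * (c / 2)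
                     + ((t : nat) == t'.+1)%:R * (c / 2))); last first.
    move=> t' _.
    rewrite (eq_bigr (fun s' => (s == s')%:R * (((S_p R p)^T) t t' * c))); last first.
      by move=> sp _; rewrite !mxE; ring.
    by rewrite (@sum_delta _ s (fun=> ((S_p R p)^T) t t' * c)) !mxE /S_e; field.
  rewrite big_split /= (sum_ind1 _ _ (fun _ => c / 2)) (sum_ind2 _ _ (fun _ => c / 2)).
  by rewrite /bs; field.
pose fbM (t : 'I_p) (s : 'I_n) : R :=
  if t == 0%N :> nat then p%:R * f0 s
  else if t == p.-1 :> nat then p%:R * (- f1 s) else 0.
have fbME t s : fb_minus R n p f0 f1 (mxvec_index t s) 0 = fbM t s.
  by rewrite !mxE mxvecE mxE.
pose w (t : 'I_p) (s : 'I_n) : R := fbM t s - p%:R * c * br t.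
have wsum t : \sum_s w t s = 0.
  rewrite sumrB sumr_const card_ord /fbM /br.
  have p1 : (0 < p.-1)%N by rewrite -ltnS prednK // (ltn_trans _ hp).
  have tp : (t <= p.-1)%N by rewrite -ltnS prednK ?ltn_ord // (ltn_trans _ hp).
  case: (eqVneq (t : nat) 0%N) => [t0|t0].
    rewrite -mulr_sumr t0 p1 /= -[_ *+ n]mulr_natr -nc; ring.
  case: (eqVneq (t : nat) p.-1) => [tp1|tp1].
    rewrite (eq_bigr (fun s => - (p%:R * f1 s))); last by move=> s _; ring.
    rewrite sumrN -mulr_sumr -sumf -nc tp1 ltnn /=.
    have -> : ((0 < p.-1)%N && (p.-2 < p.-1)%N) by rewrite p1 /=; case: (p.-1) p1.
    rewrite mulr1n -mulr_natr; ring.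
  have h1 : (t < p.-1)%N by rewrite ltn_neqAle tp1 tp.
  have h2 : (0 < t)%N by rewrite lt0n t0.
  have h3 : (t.-1 < p.-1)%N by apply: leq_ltn_trans (leq_pred _) h1.
  rewrite h1 h2 h3 big1 //= -[_ *+ n]mulr_natr; ring.
pose mu (t : 'I_p) (j : nat) : R := Ps (w t) (j + kappa) / n%:R.
pose m : 'cV[R]_(p * (n - kappa)) := \col_k mu (unpair k).1 (unpair k).2.
exists m, g; split.
  rewrite /feasible; apply/matrixP => k y; rewrite ord1; case/mxvec_indexP: k => t s.
  rewrite [LHS]mxE DFg fbME.
  have DMm : (D_M R n p kappa *m m) (mxvec_index t s) 0 =
      \sum_(j < n - kappa) DMblock R n kappa s j * mu t j.
    rewrite /D_M kron_mulE.
    rewrite (eq_bigr (fun t' => (t == t')%:R *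
        \sum_(j < n - kappa) DMblock R n kappa s j * mu t' j)); last first.
      move=> t' _; rewrite mulr_sumr; apply: eq_bigr => j _.
      by rewrite !mxE unpair_mx /=; ring.
    by rewrite (@sum_delta _ t (fun t' => \sum_(j < n - kappa) DMblock R n kappa s j * mu t' j)).
  rewrite DMm; have := @spatial n kappa (w t) hn hk (wsum t) s.
  rewrite /mu /w => ->; ring.
move=> k; case/mxvec_indexP: k => t s; apply/orP; left.
rewrite mxE SFg !mxE mxvecE mxE.
have bs1 : 1 <= bs t.
  rewrite /bs; case: (ltnP t p.-1) => h; first by rewrite lerDl ler0n.
  have h2 : (0 < t)%N by apply: leq_trans h; rewrite -ltnS prednK // (ltn_trans _ hp).
  have h3 : (t.-1 < p.-1)%N by rewrite -ltnS !prednK ?ltn_ord // (ltn_trans _ hp).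
  by rewrite h2 h3 add0r.
have fbp : 0 <= (if t == 0%N :> nat then f0 s / 2 else if t == p.-1 :> nat then f1 s / 2 else 0).
  by case: ifP => _; [|case: ifP => _]; rewrite ?divr_ge0.
have : 0 < c / 2 * bs t by rewrite mulr_gt0 ?divr_gt0 // (lt_le_trans _ bs1).
lra.
Qed.

End Aux.
Arguments fineb {R}. Arguments Jr {R}.
Arguments sumJ_fine {R N u v}. Arguments sumJ_inf {R N u v i}.
Arguments fine_mid {R u1 v1 u2 v2}. Arguments Jr_mid_le {R u1 v1 u2 v2}.
Arguments Jr_mid_lt {R u1 v1 u2 v2}.

Theorem lemma1 (R : realType) (n p kappa : nat) (f0 f1 : 'I_n -> R)
  (hn : (2 <= n)%N) (hp : (2 <= p)%N) (hk : (kappa <= 1)%N)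
  (hf0 : forall i, 0 <= f0 i) (hf1 : forall i, 0 <= f1 i)
  (hmass : \sum_i `|f0 i| = \sum_i `|f1 i|)
  (m1 m2 : 'cV[R]_(p * (n - kappa))) (g1 g2 : 'cV[R]_(p.-1 * n)) :
  is_minimizer R n p kappa f0 f1 m1 g1 ->
  is_minimizer R n p kappa f0 f1 m2 g2 ->
  forall i : 'I_(p * n),
    0 < (S_F R n p *m g1 + fb_plus R n p f0 f1) i ord0 ->
    0 < (S_F R n p *m g2 + fb_plus R n p f0 f1) i ord0 ->
    (S_M R n p kappa *m m1) i ord0 / (S_F R n p *m g1 + fb_plus R n p f0 f1) i ord0 =
    (S_M R n p kappa *m m2) i ord0 / (S_F R n p *m g2 + fb_plus R n p f0 f1) i ord0.
Proof.
move=> Mi1 Mi2 i v1p v2p.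
have [mw [gw [Fw finw]]] := @witness R n p kappa f0 f1 hn hp hk hf0 hf1 hmass.
pose U (m : 'cV[R]_(p * (n - kappa))) k := (S_M R n p kappa *m m) k ord0.
pose V (g : 'cV[R]_(p.-1 * n)) k := (S_F R n p *m g + fb_plus R n p f0 f1) k ord0.
have objE m g : objective R n p kappa f0 f1 m g = (\sum_k Jfun R (U m k) (V g k))%E by [].
have fin_of m g : is_minimizer R n p kappa f0 f1 m g -> forall k, fineb (U m k) (V g k).
  move=> [_ Mm] k; apply/negPn/negP => nf; have := Mm mw gw Fw.
  rewrite objE (sumJ_inf (u := U m) (v := V g) nf) objE.
  by rewrite (sumJ_fine (u := U mw) (v := V gw) finw) leye_eq.
have fin1 := fin_of _ _ Mi1; have fin2 := fin_of _ _ Mi2.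
case: Mi1 => F1 M1; case: Mi2 => F2 M2.
have e12 : \sum_k Jr (U m1 k) (V g1 k) = \sum_k Jr (U m2 k) (V g2 k).
  have := M1 m2 g2 F2; have := M2 m1 g1 F1.
  rewrite !objE (sumJ_fine fin1) (sumJ_fine fin2) !lee_fin => a b.
  by apply/le_anti; rewrite a b.
pose mm := 2^-1 *: (m1 + m2); pose gm := 2^-1 *: (g1 + g2).
have Um k : U mm k = (U m1 k + U m2 k) / 2.
  by rewrite /U /mm -scalemxAr mulmxDr !mxE mulrC.
have Vm k : V gm k = (V g1 k + V g2 k) / 2.
  rewrite /V /gm -scalemxAr mulmxDr.
  set fb := fb_plus R n p f0 f1.
  rewrite !mxE; lra.
have Fm : feasible R n p kappa f0 f1 mm gm.
  move: F1 F2; rewrite /feasible /mm /gm; set fb := fb_minus R n p f0 f1 => F1 F2.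
  rewrite -!scalemxAr !mulmxDr -scalerDr addrACA F1 F2.
  by apply/matrixP => x y; rewrite !mxE; lra.
have finm k : fineb (U mm k) (V gm k) by rewrite Um Vm; apply: fine_mid.
have := M1 mm gm Fm; rewrite !objE (sumJ_fine fin1) (sumJ_fine finm) lee_fin => le1.
apply/eqP; apply/negPn/negP => neq.
have lt : \sum_k Jr (U mm k) (V gm k) <
          \sum_k ((Jr (U m1 k) (V g1 k) + Jr (U m2 k) (V g2 k)) / 2).
  rewrite (bigD1 i) //= [X in _ < X](bigD1 i) //=.
  apply: ltr_leD; first by rewrite Um Vm; apply: Jr_mid_lt.
  by apply: ler_sum => k _; rewrite Um Vm; apply: Jr_mid_le.
move: lt; rewrite -mulr_suml big_split /= -e12 => lt.
lra.
Qed.
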